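(* Let $(E_n)_{n\in\mathbb Z}$ be the integer sequence with $E_0=0$, $E_1=E_2=1$ and $E_n+E_{n+2}=E_{n+3}$ for all $n\in\mathbb Z$. For integers $n,i,j$ let $$\Delta_{n,n+i,n+i+j}=\det\begin{pmatrix}E_n & E_{n-1} & E_{n+1}\\ E_{n+i} & E_{n+i-1} & E_{n+i+1}\\ E_{n+i+j} & E_{n+i+j-1} & E_{n+i+j+1}\end{pmatrix}.$$ Then $\Delta_{n,n+i,n+i+j}$ does not depend on $n$, and for all $n,i,j\in\mathbb Z$, $$\Delta_{n,n+i,n+i+j}=E_iE_{i+j-1}-E_{i+j}E_{i-1}.$$ *)

(* Defs.v *)
From mathcomp Require Import all_boot all_order all_algebra.
Set Implicit Arguments. Unset Strict Implicit. Unset Printing Implicit Defensive.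
Import GRing.Theory Num.Theory.
Local Open Scope ring_scope.

Definition E_seq (E : int -> int) : Prop :=
  [/\ E 0 = 0, E 1 = 1, E 2 = 1 & forall n : int, E n + E (n + 2) = E (n + 3)].

Definition Delta (E : int -> int) (n i j : int) : int :=
  \det (\matrix_(r < 3, c < 3)
          let m := (if r == 0%N :> nat then n
                    else if r == 1%N :> nat then n + i else n + i + j) in
          (if c == 0%N :> nat then E m
           else if c == 1%N :> nat then E (m - 1) else E (m + 1))).

(* Main.v *)
Require Import Defs.
From mathcomp Require Import all_boot all_order all_algebra.
From mathcomp Require Import ring.
Import GRing.Theory Num.Theory.
Local Open Scope ring_scope.

Definition D (E : int -> int) (a b c : int) : int :=
  E a * (E (b-1) * E (c+1) - E (b+1) * E (c-1))
  - E (a-1) * (E b * E (c+1) - E (b+1) * E c)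
  + E (a+1) * (E b * E (c-1) - E (b-1) * E c).

Lemma DeltaD E n i j : Delta E n i j = D E n (n+i) (n+i+j).
Proof.
rewrite /Delta (expand_det_row _ 0) !big_ord_recl big_ord0 /cofactor.
rewrite !(expand_det_row _ 0) !big_ord_recl !big_ord0 /cofactor.
rewrite !det_mx11 !mxE /= /D /bump /=.
rewrite !expr0 !expr1 /=; ring.
Qed.

Lemma Dshift {E} : E_seq E -> forall a b c, D E (a+1) (b+1) (c+1) = D E a b c.
Proof.
case=> _ _ _ H.
have rec m : E (m + 1 + 1) = E (m - 1) + E (m + 1).
  rewrite (_ : m + 1 + 1 = m - 1 + 3); last ring.
  rewrite -(H (m-1)); congr (E _ + E _); ring.
move=> a b c; rewrite /D !addrK !rec; ring.
Qed.

Lemma Dstep {E} : E_seq E -> forall n i j,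
  Delta E (n+1) i j = Delta E n i j.
Proof.
move=> HE n i j; rewrite !DeltaD -(Dshift HE n (n+i) (n+i+j)).
congr (D E _ _ _); ring.
Qed.

Lemma Dconst {E} : E_seq E -> forall n i j, Delta E n i j = Delta E 0 i j.
Proof.
move=> HE n i j.
have pos k : Delta E k%:Z i j = Delta E 0 i j.
  elim: k => [//|k IH]; rewrite -IH -(Dstep HE k); congr (Delta E _ i j).
  by rewrite intS addrC.
case: n => k; first exact: pos.
rewrite NegzE.
elim: k => [|k IH]; first by rewrite -(Dstep HE (-1)) addrC subrr.
rewrite -IH -(Dstep HE (- (k.+2)%:Z)); congr (Delta E _ i j).
rewrite (intS k.+1) (intS k); ring.
Qed.

Theorem theorem15 (E : int -> int) : E_seq E ->
  (forall n n' i j : int, Delta E n i j = Delta E n' i j) /\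
  (forall n i j : int,
      Delta E n i j = E i * E (i + j - 1) - E (i + j) * E (i - 1)).
Proof.
move=> HE; split.
  by move=> n n' i j; rewrite !(Dconst HE _ _ j) // (Dconst HE n').
move=> n i j; rewrite (Dconst HE) DeltaD /D !add0r.
case: HE => E0 E1 E2 H.
have Em1 : E (-1) = 0.
  have h := H (-1); rewrite (_ : -1 + 2 = 1) // (_ : -1 + 3 = 2) // E1 E2 in h.
  by apply: (addIr 1); rewrite add0r h.
by rewrite Em1 E0 E1 !mul0r subr0 add0r mul1r [E (i + j) * _]mulrC.
Qed.
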